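(* Let $R$ be a ring such that whenever $a,b\in R$ satisfy $a+b=1$, there exist $r,s,e\in R$ with $1+ar\in eR$, $1+bs\in(1-e)R$ and $eR(1-e)\subseteq J(R)$. Then $R$ is feckly clean.
   Context: Rings are associative with identity, not necessarily commutative; $J(R)$ is the Jacobson radical. An element $u\in R$ is full if $RuR=R$. An element $a\in R$ is feckly clean if there exist $e\in R$ and a full element $u\in R$ with $a=e+u$ and $eR(1-e)\subseteq J(R)$; $R$ is feckly clean if every element is feckly clean. *)

(* Defs.v *)
From HB Require Import structures.
From mathcomp Require Import all_boot all_order all_algebra.
Set Implicit Arguments. Unset Strict Implicit. Unset Printing Implicit Defensive.
Import GRing.Theory.
Local Open Scope ring_scope.

Definition in_jacobson (R : pzRingType) (x : R) : Prop :=
  forall r : R, exists y : R, y * (1 - r * x) = 1.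

(* u is full iff the two-sided ideal RuR is R, i.e. 1 is a finite sum
   of elements a u b. *)
Definition full (R : pzRingType) (u : R) : Prop :=
  exists s : seq (R * R), \sum_(p <- s) p.1 * u * p.2 = 1.

Definition corner_in_J (R : pzRingType) (e : R) : Prop :=
  forall r : R, in_jacobson (e * r * (1 - e)).

Definition feckly_clean_elt (R : pzRingType) (a : R) : Prop :=
  exists e u : R, a = e + u /\ full u /\ corner_in_J e.

Definition feckly_clean (R : pzRingType) : Prop :=
  forall a : R, feckly_clean_elt a.

(* Main.v *)
Require Import Defs.
From HB Require Import structures.
From mathcomp Require Import all_boot all_order all_algebra.
Import GRing.Theory.
Local Open Scope ring_scope.

Theorem corollary2p7 (R : pzRingType) :
  (forall a b : R, a + b = 1 ->
     exists r s e : R,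
       (exists x : R, 1 + a * r = e * x) /\
       (exists y : R, 1 + b * s = (1 - e) * y) /\
       corner_in_J e) ->
  feckly_clean R.
Proof.
move=> H a.
have hab : a + (1 - a) = 1 by rewrite addrC subrK.
have [r [s [e [[x H1] [[y H2] HJ]]]]] := H a (1 - a) hab.
set u := a - e.
exists e, u; split; first by rewrite /u addrC subrK.
split=> //.
have L1 : e * (x - r) - u * r = 1.
  by rewrite /u mulrBr mulrBl opprB addrA subrK -H1 addrK.
have L2 : (1 - e) * (y - s) + u * s = 1.
  rewrite /u mulrBr mulrBl -H2 !mulrBl !mul1r.
  rewrite opprB -!addrA -[X in _ = X]addr0; congr (_ + _).
  by rewrite [e * s + _]addrCA [-(a * s) + _]addrCA addNKr addrCA (addKr (a * s)) subrr.
have L3 : e = e * (1 - e) * (y - s) + e * u * s.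
  by rewrite -!mulrA -mulrDr L2 mulr1.
have L4 : 1 - e * (1 - e) * ((y - s) * (x - r)) = e * u * (s * (x - r)) - u * r.
  rewrite -{1}L1 {1}L3 mulrDl !mulrA.
  by rewrite addrC -!addrA addKr.
have [z Hz] := HJ 1 ((y - s) * (x - r)).
rewrite mulr1 in Hz.
set c := e * (1 - e) in Hz L4.
set t := (y - s) * (x - r) in Hz L4.
have Hinv : (1 + c * z * t) * (1 - c * t) = 1.
  have E : t * (1 - c * t) = (1 - t * c) * t.
    by rewrite mulrBr mulrBl mulr1 mul1r mulrA.
  by rewrite mulrDl mul1r -(mulrA (c * z)) E -(mulrA c z) (mulrA z) Hz mul1r subrK.
exists [:: ((1 + c * z * t) * e, s * (x - r)); (- (1 + c * z * t), r)].
rewrite !big_cons big_nil /= addr0.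
transitivity ((1 + c * z * t) * (1 - c * t)); last exact Hinv.
by rewrite L4 (mulrBr (1 + c * z * t)) !mulrA !mulNr.
Qed.
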